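(* There exist absolute constants $C,\bar C$ such that for all $n\ge1$ and $d\ge C$, with $S_n^d=\sum_{\ell=1}^dP_n^\ell$ where $P_n^\ell(i,j)=\mathbf 1(\pi_n^\ell(i)=j)$ for independent uniformly random permutations $\pi_n^1,\dots,\pi_n^d$ of $[n]$: (i) $\mathbb P\big(\operatorname{Tr}S_n^d(S_n^d)^*\ge nd+xd^2\big)\le d\,e^{-d(x-e)}$ for all $x\ge e$; (ii) $\mathbb E\operatorname{Tr}\big(S_n^d(S_n^d)^*\big)^2\le 2nd^2+\bar Cd^4$. *)

(* Defs.v *)
From HB Require Import structures.
From mathcomp Require Import all_boot all_order all_algebra all_fingroup.
From mathcomp Require Import reals.
From mathcomp Require Import sequences exp.
Set Implicit Arguments. Unset Strict Implicit. Unset Printing Implicit Defensive.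
Import Order.TTheory GRing.Theory Num.Theory.
Local Open Scope ring_scope.

(* A sample of d independent uniform random permutations of [n] = 'I_n. *)
Definition perm_sample (n d : nat) := {ffun 'I_d -> {perm 'I_n}}.

Definition Smat (R : realType) (n d : nat) (p : perm_sample n d) : 'M[R]_n :=
  \sum_(l < d) perm_mx (p l).

Definition unif_prob (R : realType) (T : finType) (E : pred T) : R :=
  #|E|%:R / #|T|%:R.
Definition unif_exp (R : realType) (T : finType) (f : T -> R) : R :=
  (\sum_(t : T) f t) / #|T|%:R.

(* Main.v *)
Require Import Defs.
From HB Require Import structures.
From mathcomp Require Import all_boot all_order all_algebra all_fingroup.
From mathcomp Require Import reals.
From mathcomp Require Import sequences exp.
From mathcomp Require Import ring lra.
Import Order.TTheory GRing.Theory Num.Theory.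
Local Open Scope ring_scope.

Section Fix.
Variable R : realType.
Variable n : nat.
Local Notation P := {perm 'I_n}.

Definition fx (s : P) : R := \tr (perm_mx s).

Lemma fxE s : fx s = \sum_i ((s i == i)%:R).
Proof. by rewrite /fx /mxtrace; apply: eq_bigr => i _; rewrite !mxE. Qed.

Lemma fxC s t : fx (s * t) = fx (t * s).
Proof. by rewrite /fx !perm_mxM mxtrace_mulC. Qed.

Lemma fxV s : fx s^-1 = fx s.
Proof. by rewrite /fx -tr_perm_mx mxtrace_tr. Qed.

Lemma fx_ge0 s : 0 <= fx s.
Proof. by rewrite fxE; apply: sumr_ge0 => i _; rewrite ler0n. Qed.

Lemma fx_le s : fx s <= n%:R.
Proof.
rewrite fxE -[n in n%:R]card_ord -sum1_card natr_sum ler_sum // => i _.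
by case: (_ == _).
Qed.

Lemma sum_ind (T : finType) (b : pred T) : \sum_t ((b t)%:R : R) = #|b|%:R.
Proof.
rewrite -sum1_card natr_sum [RHS]big_mkcond; apply: eq_bigr => t _.
by rewrite unfold_in; case: (b t).
Qed.

Lemma card_fixA (A : {set 'I_n}) :
  #|[pred s : P | [forall i in A, s i == i]]| = (n - #|A|)`!.
Proof.
have -> : (n - #|A|)%N = #|~: A|.
  by rewrite -[n in (n - _)%N](card_ord n) -(cardsC A) addKn.
rewrite -card_perm; apply: eq_card => s; rewrite !inE /perm_on.
apply/forall_inP/subsetP => [H x|H x xA].
  rewrite !inE; apply: contraNN => xA; exact: H.
by move: (H x); rewrite !inE xA /=; case: (s x == x) => // /(_ isT).
Qed.

Lemma sum_fx : \sum_(s : P) fx s <= n`!%:R.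
Proof.
under eq_bigr do rewrite fxE.
rewrite exchange_big /=.
under eq_bigr => i _.
  rewrite sum_ind.
  have -> : #|[pred s : P | s i == i]| = #|[pred s : P | [forall j in [set i], s j == j]]|.
    apply: eq_card => s; rewrite !inE.
    apply/idP/forall_inP => [/eqP H j| H]; first by rewrite inE => /eqP ->; rewrite H.
    by apply: H; rewrite inE.
  rewrite card_fixA cards1.
  over.
rewrite sumr_const card_ord -mulrnA ler_nat.
by case: n => // m; rewrite factS subn1 /= mulnC.
Qed.


Lemma sum_fix2 (i j : 'I_n) : i != j ->
  \sum_(s : P) ((s i == j) && (s j == i))%:R = (n - 2)`!%:R :> R.
Proof.
move=> ij.
rewrite (reindex_inj (mulIg (tperm i j))) /=.
rewrite sum_ind.
have -> : (n - 2)%N = (n - #|[set i; j]|)%N by rewrite cards2 ij.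
rewrite -card_fixA; congr (_%:R); apply: eq_card => s; rewrite unfold_in /= !permM.
rewrite !(canF_eq (tpermK i j)) tpermR tpermL.
apply/andP/forall_inP => [[H1 H2] k|H]; last first.
  by split; apply: H; rewrite !inE eqxx ?orbT.
by rewrite !inE => /orP[] /eqP ->.
Qed.

Lemma sum_fx_sq : \sum_(s : P) fx (s * s) <= 2 * n`!%:R.
Proof.
under eq_bigr do rewrite fxE.
under eq_bigr do under eq_bigr do rewrite permM.
rewrite exchange_big /=.
have H i : \sum_(s : P) ((s (s i) == i)%:R : R) <= (2 * (n - 1)`!)%:R.
  have E s : ((s (s i) == i)%:R : R) = \sum_j ((s i == j) && (s j == i))%:R.
    rewrite (bigD1 (s i)) //= eqxx /= big1 ?addr0 // => j /negbTE.
    by rewrite eq_sym => ->.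
  under eq_bigr do rewrite E.
  rewrite exchange_big /= (bigD1 i) //=.
  under [X in _ + X]eq_bigr => j ij do rewrite sum_fix2 1?eq_sym //.
  rewrite sumr_const.
  have -> : \sum_(s : P) (((s i == i) && (s i == i))%:R : R) = (n - 1)`!%:R.
    rewrite sum_ind -(cards1 i) -card_fixA; congr (_%:R); apply: eq_card => s.
    rewrite unfold_in /= andbb; apply/idP/forall_inP => [/eqP H k|H].
      by rewrite inE => /eqP ->; rewrite H.
    by apply: H; rewrite inE.
  rewrite -mulrnA -natrD ler_nat.
  have -> : #|[pred j | j != i]| = n.-1.
    by rewrite cardC1 card_ord.
  clear E; case: n i => [[]//|[|m]] _ //=; by rewrite !subSS !subn0 factS [X in (_ + X)%N]mulnC mul2n -addnn.
apply: le_trans (ler_sum _ (fun i _ => H i)) _.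
rewrite sumr_const card_ord -mulrnA -natrM ler_nat.
by case: n => // m; rewrite factS subn1 /= mulnCA mulnC.
Qed.

End Fix.

Section Avg.
Variable R : realType.
Variables n d : nat.
Local Notation P := {perm 'I_n}.
Local Notation Q := {ffun 'I_d -> {perm 'I_n}}.

Definition upd (p : Q) (m : 'I_d) (t : P) : Q :=
  [ffun k => if k == m then t else p k].

Lemma upd_eq p m t : upd p m t m = t.
Proof. by rewrite ffunE eqxx. Qed.

Lemma upd_neq p m t k : k != m -> upd p m t k = p k.
Proof. by rewrite ffunE => /negbTE ->. Qed.

Lemma avg (F : Q -> R) m :
  n`!%:R * \sum_p F p = \sum_p \sum_(t : P) F (upd p m t).
Proof.
under [RHS]eq_bigr => p _ do rewrite (reindex_inj (mulIg (p m))) /=.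
rewrite exchange_big /=.
have inj u : injective (fun p : Q => upd p m (u * p m)).
  move=> p q /= E; apply/ffunP => k.
  have := congr1 (fun f : Q => f k) E; rewrite !ffunE.
  case: eqP => [-> |//]; exact: mulgI.
rewrite [RHS](eq_bigr (fun _ => \sum_p F p)) => [|u _]; last by rewrite [RHS](reindex_inj (inj u)).
by rewrite sumr_const card_Sn mulr_natl.
Qed.

Lemma card_Q : #|{: Q}| = (n`! ^ d)%N.
Proof. by rewrite card_ffun card_Sn card_ord. Qed.

Lemma core1 m (W : Q -> P) :
  (forall p t, W (upd p m t) = W p) ->
  \sum_(p : Q) fx R n (p m * W p)%g <= #|{: Q}|%:R.
Proof.
move=> HW.
have fpos : (0 : R) < n`!%:R by rewrite ltr0n fact_gt0.
rewrite -(ler_pM2l fpos) (avg _ m).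
under eq_bigr => p _.
  under eq_bigr => t _ do rewrite upd_eq HW.
  rewrite (reindex_inj (mulIg (W p)^-1%g)) /=.
  under eq_bigr => t _ do rewrite -mulgA mulVg mulg1.
  over.
apply: le_trans (ler_sum _ (fun p _ => sum_fx R n)) _.
by rewrite sumr_const mulr_natr.
Qed.

Lemma core2 m (W : Q -> P) :
  (forall p t, W (upd p m t) = W p) ->
  \sum_(p : Q) fx R n ((p m * W p) * (p m * W p))%g <= 2 * #|{: Q}|%:R.
Proof.
move=> HW.
have fpos : (0 : R) < n`!%:R by rewrite ltr0n fact_gt0.
rewrite -(ler_pM2l fpos) (avg _ m).
under eq_bigr => p _.
  under eq_bigr => t _ do rewrite upd_eq HW.
  rewrite (reindex_inj (mulIg (W p)^-1%g)) /=.
  under eq_bigr => t _ do rewrite !mulgA !mulgKV.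
  over.
apply: le_trans (ler_sum _ (fun p _ => sum_fx_sq R n)) _.
by rewrite sumr_const -[_ *+ #|_|]mulr_natr mulrCA mulrA.
Qed.

End Avg.

Section Words.
Variable R : realType.
Variables n d : nat.
Local Notation P := {perm 'I_n}.
Local Notation Q := {ffun 'I_d -> {perm 'I_n}}.

Definition wd (p : Q) a b c e : P := (p a * (p b)^-1 * p c * (p e)^-1)%g.

Lemma uniq_a a b c e : a != b -> a != c -> a != e ->
  \sum_(p : Q) fx R n (wd p a b c e) <= #|{: Q}|%:R.
Proof.
move=> ab ac ae.
have := @core1 R n d a (fun p => (p b)^-1 * p c * (p e)^-1)%g.
rewrite /wd; under eq_bigr do rewrite !mulgA; apply.
by move=> p t; rewrite !upd_neq // eq_sym.
Qed.

Lemma uniq_c a b c e : c != a -> c != b -> c != e ->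
  \sum_(p : Q) fx R n (wd p a b c e) <= #|{: Q}|%:R.
Proof.
move=> ca cb ce.
have E p : fx R n (wd p a b c e) = fx R n (p c * ((p e)^-1 * p a * (p b)^-1))%g.
  by rewrite /wd fxC !mulgA fxC !mulgA.
rewrite (eq_bigr _ (fun p _ => E p)); apply: core1.
by move=> p t; rewrite !upd_neq // eq_sym.
Qed.

Lemma uniq_b a b c e : b != a -> b != c -> b != e ->
  \sum_(p : Q) fx R n (wd p a b c e) <= #|{: Q}|%:R.
Proof.
move=> ba bc be.
have E p : fx R n (wd p a b c e) = fx R n (p b * ((p a)^-1 * p e * (p c)^-1))%g.
  by rewrite /wd -fxV !invMg !invgK !mulgA fxC !mulgA fxC !mulgA.
rewrite (eq_bigr _ (fun p _ => E p)); apply: core1.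
by move=> p t; rewrite !upd_neq // eq_sym.
Qed.

Lemma uniq_e a b c e : e != a -> e != b -> e != c ->
  \sum_(p : Q) fx R n (wd p a b c e) <= #|{: Q}|%:R.
Proof.
move=> ea eb ec.
have E p : fx R n (wd p a b c e) = fx R n (p e * ((p c)^-1 * p b * (p a)^-1))%g.
  by rewrite /wd -fxV !invMg !invgK !mulgA.
rewrite (eq_bigr _ (fun p _ => E p)); apply: core1.
by move=> p t; rewrite !upd_neq // eq_sym.
Qed.

Lemma sq_ab a b : a != b ->
  \sum_(p : Q) fx R n (wd p a b a b) <= 2 * #|{: Q}|%:R.
Proof.
move=> ab.
have := @core2 R n d a (fun p => (p b)^-1)%g.
rewrite /wd; under eq_bigr do rewrite !mulgA; apply.
by move=> p t; rewrite !upd_neq // eq_sym.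
Qed.

Lemma triv_word a b c e :
  \sum_(p : Q) fx R n (wd p a b c e) <= #|{: Q}|%:R * n%:R.
Proof.
apply: le_trans (ler_sum _ (fun p _ => fx_le R n (wd p a b c e))) _.
by rewrite sumr_const mulr_natl.
Qed.

Lemma bound_word a b c e :
  \sum_(p : Q) fx R n (wd p a b c e) <=
  #|{: Q}|%:R * (n%:R * ((a == b) && (c == e))%:R
                 + n%:R * ((b == c) && (a == e))%:R + 2).
Proof.
have Q0 : (0 : R) <= #|{: Q}|%:R by rewrite ler0n.
have [T1|nT1] := boolP ((a == b) && (c == e)).
  apply: le_trans (triv_word a b c e) _; rewrite ler_wpM2l // mulr1n.
  have : (0 : R) <= n%:R * ((b == c) && (a == e))%:R by rewrite mulr_ge0 ?ler0n.
  lra.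
have [T2|nT2] := boolP ((b == c) && (a == e)).
  apply: le_trans (triv_word a b c e) _.
  rewrite ler_wpM2l // mulr1n mulr0n; lra.
rewrite !mulr0n !mulr0 !add0r.
have le2 : #|{: Q}|%:R <= #|{: Q}|%:R * 2 :> R.
  by rewrite ler_peMr // ler1n.
have [ab|ab] := eqVneq a b.
  subst b; move: nT1; rewrite eqxx /= => ce.
  have [ca|ca] := eqVneq c a.
    subst c; apply: le_trans le2; apply: uniq_e; by rewrite // eq_sym.
  apply: le_trans le2; apply: uniq_c => //.
have [ac|ac] := eqVneq a c.
  subst c; have [be|be] := eqVneq b e.
    by subst e; rewrite mulrC; apply: sq_ab.
  apply: le_trans le2; apply: uniq_b => //; by rewrite eq_sym.
have [ae|ae] := eqVneq a e.
  subst e; move: nT2; rewrite eqxx andbT => bc.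
  apply: le_trans le2; apply: uniq_b => //; by rewrite eq_sym.
by apply: le_trans le2; apply: uniq_a.
Qed.

End Words.
Arguments wd {n d}.

Lemma trmx_sumL (R : realType) n d (F : 'I_d -> 'M[R]_n) :
  (\sum_l F l)^T = \sum_l (F l)^T.
Proof. by rewrite raddf_sum. Qed.

Section Trace.
Variable R : realType.
Variables n d : nat.
Local Notation P := {perm 'I_n}.
Local Notation Q := {ffun 'I_d -> {perm 'I_n}}.

Lemma SST (p : Q) : Smat R p *m (Smat R p)^T =
  \sum_a \sum_b perm_mx (p a * (p b)^-1)%g.
Proof.
rewrite /Smat trmx_sumL mulmx_suml; apply: eq_bigr => a _.
rewrite mulmx_sumr; apply: eq_bigr => b _.
by rewrite tr_perm_mx perm_mxM.
Qed.

Lemma trSST (p : Q) : \tr (Smat R p *m (Smat R p)^T) =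
  \sum_a \sum_b fx R n (p a * (p b)^-1)%g.
Proof.
rewrite SST raddf_sum; apply: eq_bigr => a _.
by rewrite raddf_sum.
Qed.

Lemma trSST2 (p : Q) : \tr ((Smat R p *m (Smat R p)^T) ^+ 2) =
  \sum_a \sum_b \sum_c \sum_e fx R n (wd p a b c e).
Proof.
rewrite expr2 -mulmxE SST mulmx_suml raddf_sum; apply: eq_bigr => a _.
rewrite mulmx_suml raddf_sum; apply: eq_bigr => b _.
rewrite mulmx_sumr raddf_sum; apply: eq_bigr => c _.
rewrite mulmx_sumr raddf_sum; apply: eq_bigr => e _.
by rewrite /fx /wd -!perm_mxM !mulgA.
Qed.

Lemma sum_eq1 (a : 'I_d) : \sum_(b : 'I_d) ((a == b)%:R : R) = 1.
Proof.
rewrite (bigD1 a) //= eqxx big1 ?addr0 // => b /negbTE.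
by rewrite eq_sym => ->.
Qed.

Lemma sum_eqP (B : bool) (c : 'I_d) : \sum_(e : 'I_d) ((B && (c == e))%:R : R) = B%:R.
Proof.
rewrite (bigD1 c) //= eqxx andbT big1 ?addr0 // => e /negbTE.
by rewrite eq_sym => ->; rewrite andbF.
Qed.

Lemma part2 : (1 <= d)%N ->
  unif_exp (fun p : perm_sample n d =>
                \tr ((Smat R p *m (Smat R p)^T) ^+ 2))
      <= 2 * n%:R * d%:R ^+ 2 + 2 * d%:R ^+ 4.
Proof.
move=> d1.
have Qpos : (0 : R) < #|{: Q}|%:R by rewrite card_Q ltr0n expn_gt0 fact_gt0.
rewrite /unif_exp ler_pdivrMr //.
under eq_bigr do rewrite trSST2.
rewrite exchange_big.
under eq_bigr do rewrite exchange_big.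
under eq_bigr do under eq_bigr do rewrite exchange_big.
under eq_bigr do under eq_bigr do under eq_bigr do rewrite exchange_big.
pose B (a b c e : 'I_d) : R := n%:R * ((a == b) && (c == e))%:R
   + n%:R * ((b == c) && (a == e))%:R + 2.
have SB : \sum_a \sum_b \sum_c \sum_e B a b c e
   = 2 * n%:R * d%:R ^+ 2 + 2 * d%:R ^+ 4.
  rewrite /B.
  under eq_bigr => a _ do under eq_bigr => b _ do under eq_bigr => c _ do
    rewrite !big_split /= -!big_distrr /= !sum_eqP sumr_const card_ord.
  under eq_bigr => a _ do under eq_bigr => b _ do
    rewrite !big_split /= -!big_distrr /= sum_eq1 !sumr_const card_ord.
  under eq_bigr => a _ do
    rewrite !big_split /= !sumr_const card_ord (eq_bigr _ (fun i _ => mulrnAr _ _ _)) sumrMnl -big_distrr /= sum_eq1.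
  rewrite sumr_const card_ord; ring.

have E : \sum_a \sum_b \sum_c \sum_e (#|{: Q}|%:R * B a b c e)
   = #|{: Q}|%:R * \sum_a \sum_b \sum_c \sum_e B a b c e.
  rewrite big_distrr; apply: eq_bigr => a _.
  rewrite big_distrr; apply: eq_bigr => b _.
  rewrite big_distrr; apply: eq_bigr => c _.
  by rewrite big_distrr.
apply: le_trans.
  apply: ler_sum => a _; apply: ler_sum => b _; apply: ler_sum => c _.
  apply: ler_sum => e _; exact: bound_word.
by rewrite -/(B _ _ _ _) E SB mulrC.
Qed.

End Trace.

Lemma exp_partial (R : realType) (x : R) N : 0 <= x ->
  \sum_(k < N) x ^+ k / k`!%:R <= expR x.
Proof.
move=> x0.
have nd : nondecreasing_seq (series (exp_coeff x)).
  apply/nondecreasing_seqP => m; rewrite /series /= big_nat_recr //= lerDl.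
  exact: exp_coeff_ge0.
have := nondecreasing_cvgn_le nd (is_cvg_series_exp_coeff x) N.
by rewrite /series /= big_mkord.
Qed.

Section KB.
Variable R : realType.
Variable n : nat.
Local Notation P := {perm 'I_n}.
Let c : R := expR 1 - 1.

Lemma c_ge0 : 0 <= c.
Proof. have := expR_ge1Dx (1 : R); rewrite /c; lra. Qed.

Lemma expR_ind (b : bool) : expR (b%:R : R) = c * b%:R + 1.
Proof. by case: b; rewrite /c ?expR0 /=; ring. Qed.

Lemma prod_J (s : P) (J : {set 'I_n}) :
  \prod_i (if i \in J then c * (s i == i)%:R else 1)
    = c ^+ #|J| * ([forall i in J, s i == i])%:R.
Proof.
rewrite -big_mkcond /= big_split /= prodr_const.
case: (boolP [forall i in J, s i == i]) => [/forall_inP H | /forall_inPn [i iJ ni]].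
  by rewrite big1 // => i /H ->.
by rewrite (bigD1 i) //= (negbTE ni) mul0r mulr0.
Qed.

Lemma sum_expfx : \sum_(s : P) expR (fx R n s) <= n`!%:R * expR c.
Proof.
under eq_bigr => s _.
  rewrite fxE expR_sum.
  under eq_bigr do rewrite expR_ind.
  rewrite bigA_distr.
  under eq_bigr do rewrite prod_J.
  over.
rewrite exchange_big /=.
under eq_bigr do rewrite -big_distrr /= sum_ind card_fixA.
rewrite (partition_big (fun J : {set 'I_n} => (inord #|J| : 'I_n.+1)) xpredT) //=.
have Hk (k : 'I_n.+1) : \sum_(J in {set 'I_n} | inord #|J| == k) c ^+ #|J| * (n - #|J|)`!%:R
     = n`!%:R * (c ^+ k / k`!%:R).
  have E (J : {set 'I_n}) : (inord #|J| == k :> 'I_n.+1) = (#|J| == k).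
    have : (#|J| < n.+1)%N by rewrite ltnS; have := max_card J; rewrite card_ord.
    by move=> h; rewrite -(inj_eq val_inj) /= inordK.
  rewrite (eq_bigl (fun J : {set 'I_n} => #|J| == k)); last by move=> J; rewrite E.
  rewrite (eq_bigr (fun _ => c ^+ k * (n - k)`!%:R)); last by move=> J /eqP ->.
  rewrite sumr_const.
  have -> : #|[pred J : {set 'I_n} | #|J| == k]| = 'C(n, k).
    by have := card_draws (ordinal n) k; rewrite card_ord => <-; apply: eq_card => J; rewrite inE.
  have kn : (k <= n)%N by rewrite -ltnS.
  have := bin_fact kn => /(congr1 (fun m => m%:R : R)); rewrite !natrM => <-.
  have : (k`!%:R : R) != 0 by rewrite pnatr_eq0 -lt0n fact_gt0.
  move=> kf; rewrite -mulr_natr; field.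
  done.
under eq_bigr do rewrite Hk.
rewrite -big_distrr /= ler_wpM2l ?ler0n //.
have := @exp_partial R c n.+1 c_ge0.
by [].
Qed.
End KB.

Section Part1.
Variable R : realType.
Variables n d : nat.
Local Notation P := {perm 'I_n}.
Local Notation Q := {ffun 'I_d -> {perm 'I_n}}.
Let c : R := expR 1 - 1.

Lemma sum_prod (g : P -> P -> R) (a : 'I_d) :
  \sum_(p : Q) \prod_b g (p b) (p a) =
  \sum_(s : P) g s s * \prod_(b | b != a) \sum_t g t s.
Proof.
pose G s b t := if b == a then (t == s)%:R * g t s else g t s.
have E1 s : g s s * \prod_(b | b != a) \sum_t g t s = \prod_b \sum_t G s b t.
  rewrite [RHS](bigD1 a) //= /G eqxx.
  have Hs : \sum_t (t == s)%:R * g t s = g s s.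
    rewrite (bigD1 s) //= eqxx mul1r big1 ?addr0 // => t /negbTE ->.
    by rewrite mul0r.
  by rewrite Hs; congr (_ * _); apply: eq_bigr => b /negbTE ->.
have E2 (f : Q) s : \prod_b G s b (f b) = (f a == s)%:R * \prod_b g (f b) s.
  rewrite (bigD1 a) //= [in RHS](bigD1 a) //= /G eqxx -mulrA.
  by congr (_ * (_ * _)); apply: eq_bigr => b /negbTE ->.
under [RHS]eq_bigr do rewrite E1 bigA_distr_bigA.
rewrite exchange_big /=; apply: eq_bigr => f _.
rewrite (eq_bigr _ (fun s _ => E2 f s)) [RHS](bigD1 (f a)) //=.
rewrite eqxx mul1r [X in _ = _ + X]big1 ?addr0 // => s /negbTE.
by rewrite eq_sym => ->; rewrite mul0r.
Qed.

Lemma fx1 : fx R n 1 = n%:R.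
Proof. by rewrite /fx perm_mx1 mxtrace1. Qed.

Lemma sum_expZ (a : 'I_d) : (1 <= d)%N ->
  \sum_(p : Q) expR (\sum_b fx R n (p b * (p a)^-1)%g)
    <= #|{: Q}|%:R * expR n%:R * expR c ^+ d.-1.
Proof.
move=> d1.
under eq_bigr do rewrite expR_sum.
rewrite (sum_prod (fun t s => expR (fx R n (t * s^-1)%g)) a).
have K s : \sum_t expR (fx R n (t * s^-1)%g) = \sum_t expR (fx R n t).
  rewrite (reindex_inj (mulIg s)) /=.
  by apply: eq_bigr => t _; rewrite mulgK.
under eq_bigr do rewrite mulgV fx1 K prodr_const.
rewrite sumr_const card_Sn cardC1 card_ord.
set S := \sum_t _.
have S0 : 0 <= S by apply: sumr_ge0 => t _; exact: expR_ge0.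
have := sum_expfx R n; rewrite -/S => HS.
rewrite card_Q natrX.
case: d d1 => // d' _ /=.
have HSd : S ^+ d' <= (n`!%:R * expR c) ^+ d'.
  by apply: lerXn2r; rewrite // nnegrE mulr_ge0 ?ler0n ?expR_ge0.
apply: (@le_trans _ _ (n`!%:R * (expR n%:R * (n`!%:R * expR c) ^+ d'))).
  by rewrite -[_ *+ n`!]mulr_natl ler_wpM2l ?ler0n // ler_wpM2l ?expR_ge0.
rewrite exprMn exprS le_eqVlt; apply/orP; left; apply/eqP; ring.
Qed.

Lemma pt_bound (Z : 'I_d -> R) (T : R) : (0 < d)%N ->
  d%:R * T <= \sum_a Z a -> 1 <= \sum_a expR (Z a - T).
Proof.
move=> d0 H.
case: (boolP [exists a, T <= Z a]) => [/existsP [a Ha] | /existsPn H2].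
  rewrite (bigD1 a) //=.
  have h1 : 1 <= expR (Z a - T).
    have := expR_ge1Dx (Z a - T); move: Ha; rewrite -subr_ge0; lra.
  have h2 : 0 <= \sum_(i | i != a) expR (Z i - T).
    by apply: sumr_ge0 => i _; exact: expR_ge0.
  lra.
exfalso.
have : \sum_a Z a < \sum_(a : 'I_d) T.
  apply: ltr_sum; first by case: d d0 {Z H H2} => // d' _; rewrite /index_enum -enumT; case: (enum _) (mem_enum 'I_d'.+1 ord0) => //.
  by move=> a _; rewrite ltNge; exact: H2.
rewrite sumr_const card_ord -mulr_natl; lra.
Qed.

Lemma part1 : (1 <= d)%N -> forall x : R, expR 1 <= x ->
  unif_prob R [pred p : perm_sample n d |
                   n%:R * d%:R + x * d%:R ^+ 2 <= \tr (Smat R p *m (Smat R p)^T)]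
       <= d%:R * expR (- (d%:R * (x - expR 1))).
Proof.
move=> d1 x xe.
set T := n%:R + x * d%:R.
have Qpos : (0 : R) < #|{: Q}|%:R by rewrite card_Q ltr0n expn_gt0 fact_gt0.
rewrite /unif_prob ler_pdivrMr //.
rewrite -sum_ind.
pose Z (p : Q) a := \sum_b fx R n (p b * (p a)^-1)%g.
have pt (p : Q) : (((n%:R * d%:R + x * d%:R ^+ 2 <= \tr (Smat R p *m (Smat R p)^T))%R)%:R : R)
    <= \sum_a expR (Z p a - T).
  case: (boolP (n%:R * d%:R + x * d%:R ^+ 2 <= \tr (Smat R p *m (Smat R p)^T))) => h; last by apply: sumr_ge0 => a _; exact: expR_ge0.
  apply: pt_bound => //.
  move: h; rewrite trSST exchange_big /= /T.
  have -> : d%:R * (n%:R + x * d%:R) = n%:R * d%:R + x * d%:R ^+ 2 :> R by ring.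
  by [].
apply: le_trans (ler_sum _ (fun p _ => pt p)) _.
rewrite exchange_big /=.
under eq_bigr => a _ do under eq_bigr => p _ do rewrite expRD.
under eq_bigr => a _ do rewrite -big_distrl /=.
apply: le_trans (ler_sum _ (fun a _ => ler_wpM2r (expR_ge0 _) (sum_expZ a d1))) _.
rewrite sumr_const card_ord.
have key : expR n%:R * expR c ^+ d.-1 * expR (- T) <= expR (- (d%:R * (x - expR 1))).
  rewrite -expRM_natl -!expRD ler_expR /T /c.
  have hd : (d.-1)%:R = d%:R - 1 :> R by case: d d1 => // d' _; rewrite /= mulrSr addrK.
  have dge : 1 <= d%:R :> R by rewrite ler1n.
  have e0 : 0 <= expR 1 :> R by exact: expR_ge0.
  rewrite hd; nra.
rewrite -[_ *+ d]mulr_natl -[X in _ <= X]mulrA ler_wpM2l ?ler0n //.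
rewrite [X in _ <= X]mulrC -!mulrA ler_wpM2l ?ler0n //.
by rewrite !mulrA.
Qed.

End Part1.

Theorem lemma5p2 (R : realType) :
  exists C Cbar : R, forall n d : nat, (1 <= n)%N -> C <= d%:R ->
    (forall x : R, expR 1 <= x ->
       unif_prob R [pred p : perm_sample n d |
                   n%:R * d%:R + x * d%:R ^+ 2 <= \tr (Smat R p *m (Smat R p)^T)]
       <= d%:R * expR (- (d%:R * (x - expR 1))))
    /\
    unif_exp (fun p : perm_sample n d =>
                \tr ((Smat R p *m (Smat R p)^T) ^+ 2))
      <= 2 * n%:R * d%:R ^+ 2 + Cbar * d%:R ^+ 4.
Proof.
exists 1, 2 => n d _ Hd.
have d1 : (1 <= d)%N by rewrite -(ler_nat R).
split; first exact: part1.
exact: part2.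
Qed.
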